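(* Let $f$ be smooth and of bistable type: there is $\alpha\in(0,1)$ with $f(0)=f(\alpha)=f(1)=0$, $f'(0)<0$, $f'(1)<0$, $f'(\alpha)>0$, $f>0$ on $(-\infty,0)\cup(\alpha,1)$ and $f<0$ on $(0,\alpha)\cup(1,+\infty)$. Let $\tau\in[0,\tau_m)$ with $\tau_m:=1/\sup_{u\in[0,1]}|f'(u)|$. Suppose $c\in\mathbb{R}$ and $(U,V)$ is a solution of $$cU_\xi+V_\xi+f(U)=0,\qquad U_\xi+c\tau V_\xi-V=0,\qquad \xi\in\mathbb{R},$$ satisfying $(U,V)(-\infty)=(0,0)$ and $(U,V)(+\infty)=(1,0)$. Then (i) $c$ has the same sign as $-\int_0^1 f(u)\,du$; (ii) $c^2\tau<1$. *)

(* Defs.v *)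
From Stdlib Require Import Reals.
From Coquelicot Require Import Coquelicot.
Open Scope R_scope.

Definition smooth (f : R -> R) : Prop :=
  forall (n : nat) (x : R), ex_derive_n f n x.

Definition bistable (f : R -> R) (alpha : R) : Prop :=
  0 < alpha < 1 /\
  f 0 = 0 /\ f alpha = 0 /\ f 1 = 0 /\
  Derive f 0 < 0 /\ Derive f 1 < 0 /\ 0 < Derive f alpha /\
  (forall u, u < 0 -> 0 < f u) /\
  (forall u, alpha < u < 1 -> 0 < f u) /\
  (forall u, 0 < u < alpha -> f u < 0) /\
  (forall u, 1 < u -> f u < 0).

Definition sup_abs_deriv01 (f : R -> R) : Rbar :=
  Lub_Rbar (fun y => exists u, 0 <= u <= 1 /\ y = Rabs (Derive f u)).

(* tau_m := 1 / sup_{u in [0,1]} |f'(u)| (the sup is finite and positive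
   for smooth bistable f). *)
Definition tau_m (f : R -> R) : R := / real (sup_abs_deriv01 f).

Definition tw_solution (f : R -> R) (tau c : R) (U V : R -> R) : Prop :=
  (forall xi, ex_derive U xi) /\ (forall xi, ex_derive V xi) /\
  (forall xi, c * Derive U xi + Derive V xi + f (U xi) = 0) /\
  (forall xi, Derive U xi + c * tau * Derive V xi - V xi = 0) /\
  is_lim U m_infty 0 /\ is_lim V m_infty 0 /\
  is_lim U p_infty 1 /\ is_lim V p_infty 0.

(* Main.v *)
Require Import Defs.
From Stdlib Require Import Reals Lra.
From Coquelicot Require Import Coquelicot.
Open Scope R_scope.

Lemma cont_eps (h : R -> R) x : continuous h x ->
  forall eps, 0 < eps -> exists d, 0 < d /\ forall y, Rabs (y - x) < d -> Rabs (h y - h x) < eps.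
Proof.
  intros Hc eps He.
  destruct (Hc (ball (h x) eps) (locally_ball (h x) (mkposreal eps He))) as [d Hd].
  exists d. split. apply cond_pos. intros y Hy. apply (Hd y). exact Hy.
Qed.

Lemma lim_comp_cont (h g : R -> R) (x : Rbar) (a : R) :
  is_lim g x a -> continuous h a -> is_lim (fun t => h (g t)) x (h a).
Proof. intros Hg Hh. eapply filterlim_comp. exact Hg. exact Hh. Qed.

Lemma lim_p_eps (h : R -> R) (l : R) : is_lim h p_infty l ->
  forall eps, 0 < eps -> exists N, forall y, N < y -> Rabs (h y - l) < eps.
Proof.
  intros Hl eps He.
  destruct (Hl (ball l eps) (locally_ball l (mkposreal eps He))) as [N HN].
  exists N. intros y Hy. apply (HN y Hy).
Qed.

Lemma lim_m_eps (h : R -> R) (l : R) : is_lim h m_infty l ->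
  forall eps, 0 < eps -> exists N, forall y, y < N -> Rabs (h y - l) < eps.
Proof.
  intros Hl eps He.
  destruct (Hl (ball l eps) (locally_ball l (mkposreal eps He))) as [N HN].
  exists N. intros y Hy. apply (HN y Hy).
Qed.

Lemma lim_lin (p q : R -> R) (x : Rbar) (a b k1 k2 : R) : is_lim p x a -> is_lim q x b ->
  is_lim (fun y => k1 * p y + k2 * q y) x (k1*a + k2*b).
Proof.
  intros Hp Hq. apply is_lim_plus'.
  apply (is_lim_scal_l p k1 x a Hp). apply (is_lim_scal_l q k2 x b Hq).
Qed.

Lemma deriv_pos_local (h : R -> R) x l : is_derive h x l -> 0 < l ->
  exists d, 0 < d /\ (forall y, x < y < x + d -> h x < h y) /\
    (forall y, x - d < y < x -> h y < h x).
Proof.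
  intros Hd Hl. apply is_derive_Reals in Hd.
  destruct (Hd l Hl) as [d Hd'].
  exists d. split. apply cond_pos. split.
  - intros y Hy. assert (Hh : y - x <> 0) by lra.
    assert (Ha : Rabs (y - x) < d). rewrite Rabs_right; lra.
    specialize (Hd' _ Hh Ha). replace (x + (y - x)) with y in Hd' by ring.
    apply Rabs_def2 in Hd'. destruct Hd' as [_ H2].
    assert (Hq : 0 < (h y - h x) / (y - x)) by lra.
    assert (E : h y - h x = ((h y - h x) / (y - x)) * (y - x)) by (field; lra).
    assert (0 < ((h y - h x) / (y - x)) * (y - x)) by (apply Rmult_lt_0_compat; lra).
    lra.
  - intros y Hy. assert (Hh : y - x <> 0) by lra.
    assert (Ha : Rabs (y - x) < d). rewrite Rabs_left; lra.
    specialize (Hd' _ Hh Ha). replace (x + (y - x)) with y in Hd' by ring.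
    apply Rabs_def2 in Hd'. destruct Hd' as [_ H2].
    assert (Hq : 0 < (h y - h x) / (y - x)) by lra.
    assert (E : h x - h y = ((h y - h x) / (y - x)) * (x - y)) by (field; lra).
    assert (0 < ((h y - h x) / (y - x)) * (x - y)) by (apply Rmult_lt_0_compat; lra).
    lra.
Qed.

Lemma is_derive_eq (h : R -> R) (x l l' : R) : is_derive h x l -> l = l' -> is_derive h x l'.
Proof. intros H ->; exact H. Qed.

Lemma deriv_neg_local (h : R -> R) x l : is_derive h x l -> l < 0 ->
  exists d, 0 < d /\ (forall y, x < y < x + d -> h y < h x) /\
    (forall y, x - d < y < x -> h x < h y).
Proof.
  intros Hd Hl.
  destruct (deriv_pos_local (fun y => - h y) x (- l)) as [d [Hd0 [H1 H2]]].
  apply (is_derive_opp h x l Hd). lra.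
  exists d; split; [exact Hd0|split]; intros y Hy; [specialize (H1 y Hy)|specialize (H2 y Hy)]; lra.
Qed.

Lemma mono_dec (h dh : R -> R) a b : a <= b ->
  (forall x, a <= x <= b -> is_derive h x (dh x)) ->
  (forall x, a <= x <= b -> dh x <= 0) -> h b <= h a.
Proof.
  intros Hab Hd Hs. destruct (Req_dec a b) as [->|Hne]. lra.
  destruct (MVT_cor2 h dh a b) as [c0 [Hc1 Hc2]]. lra.
  intros; apply is_derive_Reals; auto.
  assert (dh c0 <= 0) by (apply Hs; lra).
  assert (dh c0 * (b - a) <= 0). apply Rmult_le_0_r; lra. lra.
Qed.

Lemma mono_inc (h dh : R -> R) a b : a <= b ->
  (forall x, a <= x <= b -> is_derive h x (dh x)) ->
  (forall x, a <= x <= b -> 0 <= dh x) -> h a <= h b.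
Proof.
  intros Hab Hd Hs.
  assert (- h b <= - h a); [|lra].
  apply (mono_dec (fun y => - h y) (fun y => - dh y) a b Hab).
  intros x Hx; apply (is_derive_opp h x (dh x)); auto.
  intros x Hx; specialize (Hs x Hx); lra.
Qed.

Lemma lim_le_p (h : R -> R) T K (l : R) : (forall y, T <= y -> h y <= K) -> is_lim h p_infty l -> l <= K.
Proof. intros Hm Hl.
  apply (is_lim_le_loc h (fun _ => K) p_infty l K); [|exact Hl|apply is_lim_const].
  exists T. intros; apply Hm; lra. Qed.
Lemma lim_ge_p (h : R -> R) T K (l : R) : (forall y, T <= y -> K <= h y) -> is_lim h p_infty l -> K <= l.
Proof. intros Hm Hl.
  apply (is_lim_le_loc (fun _ => K) h p_infty K l); [|apply is_lim_const|exact Hl].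
  exists T. intros; apply Hm; lra. Qed.
Lemma lim_le_m (h : R -> R) T K (l : R) : (forall y, y <= T -> h y <= K) -> is_lim h m_infty l -> l <= K.
Proof. intros Hm Hl.
  apply (is_lim_le_loc h (fun _ => K) m_infty l K); [|exact Hl|apply is_lim_const].
  exists T. intros; apply Hm; lra. Qed.
Lemma lim_ge_m (h : R -> R) T K (l : R) : (forall y, y <= T -> K <= h y) -> is_lim h m_infty l -> K <= l.
Proof. intros Hm Hl.
  apply (is_lim_le_loc (fun _ => K) h m_infty K l); [|apply is_lim_const|exact Hl].
  exists T. intros; apply Hm; lra. Qed.

Lemma tail_contra (h : R -> R) (u0 d : R) :
  (forall x, continuous h x) -> is_lim h p_infty u0 -> 0 < d ->
  (exists x, d <= Rabs (h x - u0)) ->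
  (forall T, (forall y, T <= y -> Rabs (h y - u0) < d) -> h T = u0) -> False.
Proof.
  intros Hc Hl Hd [x0 Hx0] Hk.
  destruct (lim_p_eps h u0 Hl d Hd) as [M HM].
  set (S := fun x => d <= Rabs (h x - u0)).
  assert (Hb : bound S).
  { exists M. intros x Hx. destruct (Rle_lt_dec x M) as [H|H]; [exact H|].
    specialize (HM x H). unfold S in Hx. lra. }
  destruct (completeness S Hb (ex_intro _ x0 Hx0)) as [s [Hub Hlub]].
  assert (Hgt : forall T, s < T -> h T = u0).
  { intros T HT. apply Hk. intros y Hy.
    destruct (Rlt_le_dec (Rabs (h y - u0)) d) as [H|H]; [exact H|].
    specialize (Hub y H). lra. }
  assert (Hs : h s = u0).
  { destruct (Req_dec (h s) u0) as [E|E]; [exact E|exfalso].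
    assert (Hp : 0 < Rabs (h s - u0)) by (apply Rabs_pos_lt; lra).
    destruct (cont_eps h s (Hc s) _ Hp) as [e [He He']].
    specialize (He' (s + e/2)).
    rewrite (Hgt (s + e/2)) in He' by lra.
    assert (Rabs (s + e / 2 - s) < e) by (replace (s + e/2 - s) with (e/2) by ring; rewrite Rabs_right; lra).
    specialize (He' H). rewrite (Rabs_minus_sym u0) in He'. lra. }
  destruct (cont_eps h s (Hc s) d Hd) as [e [He He']].
  assert (Hub2 : is_upper_bound S (s - e/2)).
  { intros x Hx. specialize (Hub x Hx).
    destruct (Rle_lt_dec x (s - e)) as [H|H]; [lra|exfalso].
    assert (Rabs (x - s) < e) by (rewrite Rabs_left1; lra).
    specialize (He' x H0). rewrite Hs in He'. unfold S in Hx. lra. }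
  specialize (Hlub _ Hub2). lra.
Qed.

Lemma tail_contra_m (h : R -> R) (u0 d : R) :
  (forall x, continuous h x) -> is_lim h m_infty u0 -> 0 < d ->
  (exists x, d <= Rabs (h x - u0)) ->
  (forall T, (forall y, y <= T -> Rabs (h y - u0) < d) -> h T = u0) -> False.
Proof.
  intros Hc Hl Hd [x0 Hx0] Hk.
  apply (tail_contra (fun y => h (- y)) u0 d).
  - intro x. apply (continuous_comp (fun y => - y) h). apply (ex_derive_continuous (K:=R_AbsRing) (V:=R_NormedModule) (fun y : R => - y)); auto_derive; auto. apply Hc.
  - eapply filterlim_comp; [|exact Hl].
    apply (is_lim_opp (fun y => y) p_infty p_infty (is_lim_id p_infty)).
  - exact Hd.
  - exists (- x0). rewrite Ropp_involutive. exact Hx0.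
  - intros T HT. apply Hk. intros y Hy. specialize (HT (- y)). rewrite Ropp_involutive in HT.
    apply HT; lra.
Qed.

Lemma exd_cont (h : R -> R) x : ex_derive h x -> continuous h x.
Proof. apply (ex_derive_continuous (K:=R_AbsRing) (V:=R_NormedModule) h). Qed.

Lemma crit_max (h : R -> R) x l : is_derive h x l -> (forall y, h y <= h x) -> l = 0.
Proof. intros Hd Hm. destruct (Rtotal_order l 0) as [Hl|[Hl|Hl]]; auto; exfalso.
  - destruct (deriv_neg_local h x l Hd Hl) as [d [Hd0 [_ H2]]].
    assert (h x < h (x - d/2)) by (apply H2; lra). specialize (Hm (x-d/2)). lra.
  - destruct (deriv_pos_local h x l Hd Hl) as [d [Hd0 [H1 _]]].
    assert (h x < h (x + d/2)) by (apply H1; lra). specialize (Hm (x+d/2)). lra.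
Qed.

Lemma crit_min (h : R -> R) x l : is_derive h x l -> (forall y, h x <= h y) -> l = 0.
Proof. intros Hd Hm.
  assert (- l = 0); [|lra].
  apply (crit_max (fun y => - h y) x). apply (is_derive_opp h x l Hd).
  intro y; specialize (Hm y); lra.
Qed.

Lemma no_max (h dh : R -> R) xm l : (forall x, is_derive h x (dh x)) ->
  is_derive dh xm l -> 0 < l -> dh xm = 0 -> exists y, h xm < h y.
Proof.
  intros Hh Hd Hl H0.
  destruct (deriv_pos_local dh xm l Hd Hl) as [d [Hd0 [_ H2]]].
  exists (xm - d/2).
  destruct (MVT_cor2 h dh (xm - d/2) xm) as [cc [Hcc1 Hcc2]]. lra.
  intros; apply is_derive_Reals, Hh.
  assert (dh cc < 0). { rewrite <- H0. apply H2. lra. }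
  assert (dh cc * (xm - (xm - d/2)) < 0) by nra. lra.
Qed.

Lemma no_min (h dh : R -> R) xm l : (forall x, is_derive h x (dh x)) ->
  is_derive dh xm l -> l < 0 -> dh xm = 0 -> exists y, h y < h xm.
Proof.
  intros Hh Hd Hl H0.
  destruct (deriv_neg_local dh xm l Hd Hl) as [d [Hd0 [_ H2]]].
  exists (xm - d/2).
  destruct (MVT_cor2 h dh (xm - d/2) xm) as [cc [Hcc1 Hcc2]]. lra.
  intros; apply is_derive_Reals, Hh.
  assert (0 < dh cc). { rewrite <- H0. apply H2. lra. }
  assert (0 < dh cc * (xm - (xm - d/2))) by nra. lra.
Qed.

Ltac etafix := repeat match goal with |- context [Derive (fun x0 : R => ?h x0)] => change (fun x0 : R => h x0) with h end.

Section Main.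
Variables (f : R -> R) (alpha tau c : R) (U V : R -> R).
Hypothesis Hs : smooth f.
Hypothesis Hb : bistable f alpha.
Hypothesis Ht0 : 0 <= tau.
Hypothesis Htm : tau < tau_m f.
Hypothesis Hw : tw_solution f tau c U V.

Lemma f_der x : ex_derive f x. Proof. exact (Hs 1%nat x). Qed.
Lemma f_cont x : continuous f x. Proof. apply exd_cont, f_der. Qed.
Lemma df_der x : ex_derive (Derive f) x. Proof. exact (Hs 2%nat x). Qed.
Lemma df_cont x : continuous (Derive f) x. Proof. apply exd_cont, df_der. Qed.

Lemma sup_bound : exists s, 0 < s /\ tau * s < 1 /\
  forall u, 0 <= u <= 1 -> Rabs (Derive f u) <= s.
Proof.
  destruct Hb as [Ha [H0 [Hal [H1 [Hd0 [Hd1 [Hda _]]]]]]].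
  destruct (continuity_ab_maj (fun u => Rabs (Derive f u)) 0 1) as [Mx [HM HMx]]. lra.
  { intros u _. apply continuity_pt_filterlim. apply continuous_Rabs_comp. apply df_cont. }
  unfold tau_m, sup_abs_deriv01 in Htm.
  destruct (Lub_Rbar_correct (fun y => exists u, 0 <= u <= 1 /\ y = Rabs (Derive f u))) as [Hub Hlub].
  revert Htm Hub Hlub.
  destruct (Lub_Rbar (fun y => exists u, 0 <= u <= 1 /\ y = Rabs (Derive f u))) as [s| |];
    intros Htm' Hub Hlub.
  - assert (Hs0 : Rabs (Derive f 0) <= s). { apply (Hub _ (ex_intro _ 0 (conj (conj (Rle_refl 0) Rle_0_1) eq_refl))). }
    assert (0 < Rabs (Derive f 0)) by (apply Rabs_pos_lt; lra).
    exists s. split; [lra|]. split.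
    + simpl in Htm'. apply (Rmult_lt_compat_r s) in Htm'; [|lra].
      rewrite Rinv_l in Htm' by lra. exact Htm'.
    + intros u Hu. apply (Hub _ (ex_intro _ u (conj Hu eq_refl))).
  - exfalso. specialize (Hlub (Finite (Rabs (Derive f Mx)))).
    simpl in Hlub. apply Hlub. intros y [u [Hu ->]]. simpl. apply HM; exact Hu.
  - exfalso. specialize (Hub _ (ex_intro _ 0 (conj (conj (Rle_refl 0) Rle_0_1) eq_refl))). simpl in Hub. exact Hub.
Qed.

Definition g u := 1 - tau * Derive f u.

Lemma g_bound : exists s, 0 < s /\ tau * s < 1 /\
  (forall u, 0 <= u <= 1 -> Rabs (Derive f u) <= s) /\
  (forall u, 0 <= u <= 1 -> 1 - tau * s <= g u).
Proof.
  destruct sup_bound as [s [Hs0 [Hs1 Hs2]]]. exists s. repeat split; auto.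
  intros u Hu. unfold g. specialize (Hs2 u Hu).
  assert (Derive f u <= s) by (eapply Rle_trans; [apply Rle_abs|exact Hs2]).
  assert (tau * Derive f u <= tau * s) by (apply Rmult_le_compat_l; lra). lra.
Qed.

Definition F u := RInt f 0 u.

Lemma f_RInt a b : ex_RInt f a b.
Proof. apply (ex_RInt_continuous (V:=R_CompleteNormedModule)). intros; apply f_cont. Qed.

Lemma F_der u : is_derive F u (f u).
Proof.
  apply (is_derive_RInt (V:=R_CompleteNormedModule) f F 0 u). apply filter_forall. intro b. unfold F. apply (RInt_correct (V:=R_CompleteNormedModule)), f_RInt.
  apply f_cont.
Qed.

Lemma F_cont u : continuous F u.
Proof. apply exd_cont. eexists. apply F_der. Qed.

Lemma F0 : F 0 = 0.
Proof. unfold F. rewrite RInt_point. reflexivity. Qed.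

Lemma F_chasles u : F 1 = F u + RInt f u 1.
Proof. unfold F. rewrite <- (RInt_Chasles f 0 u 1) by apply f_RInt. reflexivity. Qed.

Lemma RInt_zero a b : RInt (fun _ => 0) a b = 0.
Proof. rewrite RInt_const. unfold scal; simpl; unfold mult; simpl. ring. Qed.

Lemma F_lt1 u : alpha < u -> u <> 1 -> F u < F 1.
Proof.
  destruct Hb as [Ha [H0 [Hal [H1 [Hd0 [Hd1 [Hda [Hn [Hp1 [Hp2 Hp3]]]]]]]]]].
  intros Hu Hu1. rewrite (F_chasles u).
  destruct (Rlt_le_dec u 1) as [Hl|Hl].
  - assert (0 < RInt f u 1); [|lra].
    apply RInt_gt_0. lra. intros x Hx; apply Hp1; lra. intros; apply f_cont.
  - rewrite <- opp_RInt_swap by apply f_RInt.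
    assert (RInt f 1 u < RInt (fun _ => 0) 1 u).
    apply RInt_lt. lra. intros; apply continuous_const. intros; apply f_cont.
    intros x Hx; apply Hp3; lra.
    rewrite RInt_zero in H. change (opp (RInt f 1 u)) with (- RInt f 1 u). lra.
Qed.

Lemma F_lt0 u : u < alpha -> u <> 0 -> F u < 0.
Proof.
  destruct Hb as [Ha [H0 [Hal [H1 [Hd0 [Hd1 [Hda [Hn [Hp1 [Hp2 Hp3]]]]]]]]]].
  intros Hu Hu0. unfold F.
  destruct (Rlt_le_dec 0 u) as [Hl|Hl].
  - assert (RInt f 0 u < RInt (fun _ => 0) 0 u); [|rewrite RInt_zero in H; exact H].
    apply RInt_lt. lra. intros; apply continuous_const.
    intros; apply f_cont. intros x Hx; apply Hp2; lra.
  - rewrite <- opp_RInt_swap by apply f_RInt.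
    assert (0 < RInt f u 0); [|change (opp (RInt f u 0)) with (- RInt f u 0); lra].
    apply RInt_gt_0. lra. intros x Hx; apply Hn; lra. intros; apply f_cont.
Qed.


Definition P x := Derive U x.
Definition D := 1 - c*c*tau.

Lemma U_der x : ex_derive U x. Proof. destruct Hw as [H _]; apply H. Qed.
Lemma V_der x : ex_derive V x. Proof. destruct Hw as [_ [H _]]; apply H. Qed.
Lemma U_cont x : continuous U x. Proof. apply exd_cont, U_der. Qed.
Lemma U_isd x : is_derive U x (P x). Proof. apply Derive_correct, U_der. Qed.
Lemma eq1 x : c * P x + Derive V x + f (U x) = 0.
Proof. destruct Hw as [_ [_ [H _]]]; apply H. Qed.
Lemma eq2 x : P x + c * tau * Derive V x - V x = 0.
Proof. destruct Hw as [_ [_ [_ [H _]]]]; apply H. Qed.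
Lemma U_lim_m : is_lim U m_infty 0. Proof. destruct Hw as [_ [_ [_ [_ [H _]]]]]; apply H. Qed.
Lemma V_lim_m : is_lim V m_infty 0. Proof. destruct Hw as [_ [_ [_ [_ [_ [H _]]]]]]; apply H. Qed.
Lemma U_lim_p : is_lim U p_infty 1. Proof. destruct Hw as [_ [_ [_ [_ [_ [_ [H _]]]]]]]; apply H. Qed.
Lemma V_lim_p : is_lim V p_infty 0. Proof. destruct Hw as [_ [_ [_ [_ [_ [_ [_ H]]]]]]]; apply H. Qed.

Lemma dV_eq x : Derive V x = - c * P x - f (U x).
Proof. generalize (eq1 x); lra. Qed.

Lemma V_eq x : V x = D * P x - c * tau * f (U x).
Proof.
  assert (H : V x = P x + c * tau * Derive V x) by (generalize (eq2 x); lra).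
  rewrite H, dV_eq. unfold D. ring.
Qed.

Lemma glob_max x0 : 1 < U x0 -> exists xm, forall x, U x <= U xm.
Proof.
  intro Hx0.
  destruct (lim_p_eps U 1 U_lim_p (U x0 - 1)) as [N HN]. lra.
  destruct (lim_m_eps U 0 U_lim_m (U x0)) as [M HM]. lra.
  set (a := Rmin M x0 - 1). set (b := Rmax N x0 + 1).
  assert (Hx0in : a <= x0 <= b) by (unfold a,b; generalize (Rmin_r M x0) (Rmax_r N x0); lra).
  destruct (continuity_ab_maj U a b) as [xm [H1 H2]]. lra.
  { intros; apply continuity_pt_filterlim, U_cont. }
  exists xm. intro x.
  assert (H1x0 := H1 x0 Hx0in).
  destruct (Rlt_le_dec x a) as [Hxa|Hxa].
  - assert (x < M) by (unfold a in Hxa; generalize (Rmin_l M x0); lra).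
    specialize (HM x H). apply Rabs_def2 in HM. lra.
  - destruct (Rle_lt_dec x b) as [Hxb|Hxb].
    + apply H1; lra.
    + assert (N < x) by (unfold b in Hxb; generalize (Rmax_l N x0); lra).
      specialize (HN x H). apply Rabs_def2 in HN. lra.
Qed.

Lemma glob_min x0 : U x0 < 0 -> exists xm, forall x, U xm <= U x.
Proof.
  intro Hx0.
  destruct (lim_p_eps U 1 U_lim_p 1) as [N HN]. lra.
  destruct (lim_m_eps U 0 U_lim_m (- U x0)) as [M HM]. lra.
  set (a := Rmin M x0 - 1). set (b := Rmax N x0 + 1).
  assert (Hx0in : a <= x0 <= b) by (unfold a,b; generalize (Rmin_r M x0) (Rmax_r N x0); lra).
  destruct (continuity_ab_min U a b) as [xm [H1 H2]]. lra.
  { intros; apply continuity_pt_filterlim, U_cont. }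
  exists xm. intro x.
  assert (H1x0 := H1 x0 Hx0in).
  destruct (Rlt_le_dec x a) as [Hxa|Hxa].
  - assert (x < M) by (unfold a in Hxa; generalize (Rmin_l M x0); lra).
    specialize (HM x H). apply Rabs_def2 in HM. lra.
  - destruct (Rle_lt_dec x b) as [Hxb|Hxb].
    + apply H1; lra.
    + assert (N < x) by (unfold b in Hxb; generalize (Rmax_l N x0); lra).
      specialize (HN x H). apply Rabs_def2 in HN. lra.
Qed.

Section Dnz.
Hypothesis HD : D <> 0.

Lemma P_eq x : P x = (V x + c*tau*f (U x)) / D.
Proof. rewrite V_eq. field. exact HD. Qed.

Definition dP x := (Derive V x + c*tau*Derive f (U x) * P x)/D.

Lemma P_der x : is_derive P x (dP x).
Proof.
  apply (is_derive_ext (fun y => (V y + c*tau*f (U y))/D)).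
  intro t; symmetry; apply P_eq.
  auto_derive. repeat split; [apply V_der|apply f_der|apply U_der].
  unfold dP, P. etafix. unfold Rdiv. ring.
Qed.

Lemma D_dP x : D * dP x = - c * g (U x) * P x - f (U x).
Proof. unfold dP, g. rewrite dV_eq. field. exact HD. Qed.

Definition E x := D * P x ^ 2 / 2 + F (U x).
Definition dE x := - c * g (U x) * P x ^ 2.

Lemma E_der_gen (p Fg : R -> R) dp x : is_derive p x dp -> (forall u, is_derive Fg u (f u)) ->
  is_derive (fun y => D * p y ^ 2 / 2 + Fg (U y)) x (D * p x * dp + f (U x) * P x).
Proof.
  intros H HF. auto_derive. split. eexists; exact H. split. eexists; apply HF.
  split. apply U_der. auto.
  etafix. rewrite (is_derive_unique _ _ _ H). rewrite (is_derive_unique _ _ _ (HF (U x))).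
  unfold P. simpl. field.
Qed.

Lemma E_der x : is_derive E x (dE x).
Proof.
  eapply is_derive_eq. apply (E_der_gen P F (dP x) x (P_der x) F_der).
  unfold dE. replace (D * P x * dP x) with (P x * (D * dP x)) by ring. rewrite D_dP. ring.
Qed.

Lemma P_lim_p : is_lim P p_infty 0.
Proof.
  apply (is_lim_ext (fun y => /D * V y + (/D*c*tau) * f (U y))).
  intro y; rewrite P_eq; field; exact HD.
  assert (Hz : /D * 0 + (/D*c*tau) * f 1 = 0).
  { destruct Hb as [_ [_ [_ [H1 _]]]]. rewrite H1; ring. }
  rewrite <- Hz. apply (lim_lin V (fun y => f (U y)) p_infty 0 (f 1)).
  apply V_lim_p. apply lim_comp_cont. apply U_lim_p. apply f_cont.
Qed.

Lemma P_lim_m : is_lim P m_infty 0.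
Proof.
  apply (is_lim_ext (fun y => /D * V y + (/D*c*tau) * f (U y))).
  intro y; rewrite P_eq; field; exact HD.
  assert (Hz : /D * 0 + (/D*c*tau) * f 0 = 0).
  { destruct Hb as [_ [H0 _]]. rewrite H0; ring. }
  rewrite <- Hz. apply (lim_lin V (fun y => f (U y)) m_infty 0 (f 0)).
  apply V_lim_m. apply lim_comp_cont. apply U_lim_m. apply f_cont.
Qed.

Lemma sq_cont z : continuous (fun x => x ^ 2) z.
Proof. apply exd_cont. auto_derive. auto. Qed.

Lemma E_lim_p : is_lim E p_infty (F 1).
Proof.
  apply (is_lim_ext (fun y => (D/2) * (P y ^ 2) + 1 * F (U y))).
  intro y; unfold E; field.
  replace (F 1) with ((D/2) * (0 ^ 2) + 1 * F 1) by ring.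
  apply (lim_lin (fun y => P y ^ 2) (fun y => F (U y)) p_infty (0^2) (F 1)).
  apply (lim_comp_cont (fun x => x ^ 2) P). apply P_lim_p. apply sq_cont.
  apply lim_comp_cont. apply U_lim_p. apply F_cont.
Qed.

Lemma E_lim_m : is_lim E m_infty 0.
Proof.
  apply (is_lim_ext (fun y => (D/2) * (P y ^ 2) + 1 * F (U y))).
  intro y; unfold E; field.
  replace 0 with ((D/2) * (0 ^ 2) + 1 * F 0) by (rewrite F0; ring).
  apply (lim_lin (fun y => P y ^ 2) (fun y => F (U y)) m_infty (0^2) (F 0)).
  apply (lim_comp_cont (fun x => x ^ 2) P). apply P_lim_m. apply sq_cont.
  apply lim_comp_cont. apply U_lim_m. apply F_cont.
Qed.

End Dnz.

Lemma exP : exists x, P x <> 0.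
Proof.
  destruct (lim_m_eps U 0 U_lim_m (1/2)) as [M HM]. lra.
  destruct (lim_p_eps U 1 U_lim_p (1/2)) as [N HN]. lra.
  set (a := Rmin M N - 1). set (b := Rmax M N + 1).
  assert (Ha : U a < 1/2).
  { assert (a < M) by (unfold a; generalize (Rmin_l M N); lra).
    specialize (HM a H). apply Rabs_def2 in HM. lra. }
  assert (Hbb : 1/2 < U b).
  { assert (N < b) by (unfold b; generalize (Rmax_r M N); lra).
    specialize (HN b H). apply Rabs_def2 in HN. lra. }
  destruct (MVT_cor2 U P a b) as [cc [Hcc _]].
  { unfold a, b; generalize (Rmin_l M N) (Rmax_l M N); lra. }
  { intros; apply is_derive_Reals, U_isd. }
  exists cc. intro H0. rewrite H0 in Hcc. lra.
Qed.

Section Dpos.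
Hypothesis HDp : 0 < D.
Let HDnz : D <> 0. Proof. lra. Qed.

Lemma U_le1 x : U x <= 1.
Proof.
  destruct (Rle_lt_dec (U x) 1) as [H|H]; auto. exfalso.
  destruct (glob_max x H) as [xm Hm].
  assert (HP0 : P xm = 0) by (apply (crit_max U xm); [apply U_isd | exact Hm]).
  assert (Hxm : 1 < U xm) by (specialize (Hm x); lra).
  assert (Hf : f (U xm) < 0).
  { destruct Hb as [_ [_ [_ [_ [_ [_ [_ [_ [_ [_ Hp3]]]]]]]]]]. apply Hp3; lra. }
  assert (HdP : 0 < dP xm).
  { assert (H1 : D * dP xm = - f (U xm)) by (rewrite D_dP by exact HDnz; rewrite HP0; ring).
    nra. }
  destruct (no_max U P xm (dP xm) U_isd (P_der HDnz xm) HdP HP0) as [y Hy].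
  specialize (Hm y). lra.
Qed.

Lemma U_ge0 x : 0 <= U x.
Proof.
  destruct (Rle_lt_dec 0 (U x)) as [H|H]; auto. exfalso.
  destruct (glob_min x H) as [xm Hm].
  assert (HP0 : P xm = 0) by (apply (crit_min U xm); [apply U_isd | exact Hm]).
  assert (Hxm : U xm < 0) by (specialize (Hm x); lra).
  assert (Hf : 0 < f (U xm)).
  { destruct Hb as [_ [_ [_ [_ [_ [_ [_ [Hn _]]]]]]]]. apply Hn; lra. }
  assert (HdP : dP xm < 0).
  { assert (H1 : D * dP xm = - f (U xm)) by (rewrite D_dP by exact HDnz; rewrite HP0; ring).
    nra. }
  destruct (no_min U P xm (dP xm) U_isd (P_der HDnz xm) HdP HP0) as [y Hy].
  specialize (Hm y). lra.
Qed.

Lemma gP_nonneg x : 0 <= g (U x) * P x ^ 2 /\ (P x <> 0 -> 0 < g (U x) * P x ^ 2).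
Proof.
  destruct g_bound as [s [_ [Hs1 [_ Hg]]]].
  assert (0 < g (U x)) by (generalize (Hg (U x) (conj (U_ge0 x) (U_le1 x))); lra).
  split. apply Rmult_le_pos; [lra|apply pow2_ge_0].
  intro Hn. apply Rmult_lt_0_compat; [lra|]. apply pow2_gt_0. exact Hn.
Qed.

Lemma E_mono_dec : 0 <= c -> forall x y, x <= y -> E y <= E x.
Proof.
  intros Hc x y Hxy. apply (mono_dec E dE x y Hxy). intros; apply E_der, HDnz.
  intros z _. unfold dE. destruct (gP_nonneg z) as [H _]. nra.
Qed.

Lemma E_mono_inc : c <= 0 -> forall x y, x <= y -> E x <= E y.
Proof.
  intros Hc x y Hxy. apply (mono_inc E dE x y Hxy). intros; apply E_der, HDnz.
  intros z _. unfold dE. destruct (gP_nonneg z) as [H _]. nra.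
Qed.

Lemma cpos_F : 0 < c -> F 1 < 0.
Proof.
  intro Hc. destruct exP as [cc Hcc].
  assert (HdE : dE cc < 0).
  { unfold dE. destruct (gP_nonneg cc) as [_ H]. specialize (H Hcc). nra. }
  destruct (deriv_neg_local E cc (dE cc) (E_der HDnz cc) HdE) as [d [Hd [H1 _]]].
  assert (Hy : E (cc + d/2) < E cc) by (apply H1; lra).
  assert (HA : F 1 <= E (cc + d/2)).
  { apply (lim_le_p E (cc + d/2)). intros; apply E_mono_dec; lra. apply E_lim_p, HDnz. }
  assert (HB : E cc <= 0).
  { apply (lim_ge_m E cc). intros; apply E_mono_dec; lra. apply E_lim_m, HDnz. }
  lra.
Qed.

Lemma cneg_F : c < 0 -> 0 < F 1.
Proof.
  intro Hc. destruct exP as [cc Hcc].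
  assert (HdE : 0 < dE cc).
  { unfold dE. destruct (gP_nonneg cc) as [_ H]. specialize (H Hcc). nra. }
  destruct (deriv_pos_local E cc (dE cc) (E_der HDnz cc) HdE) as [d [Hd [H1 _]]].
  assert (Hy : E cc < E (cc + d/2)) by (apply H1; lra).
  assert (HA : E (cc + d/2) <= F 1).
  { apply (lim_ge_p E (cc + d/2)). intros; apply E_mono_inc; lra. apply E_lim_p, HDnz. }
  assert (HB : 0 <= E cc).
  { apply (lim_le_m E cc). intros; apply E_mono_inc; lra. apply E_lim_m, HDnz. }
  lra.
Qed.

Lemma czero_F : c = 0 -> F 1 = 0.
Proof.
  intro Hc.
  assert (HA : F 1 <= E 0).
  { apply (lim_le_p E 0). intros; apply E_mono_dec; lra. apply E_lim_p, HDnz. }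
  assert (HB : E 0 <= 0).
  { apply (lim_ge_m E 0). intros; apply E_mono_dec; lra. apply E_lim_m, HDnz. }
  assert (HC : E 0 <= F 1).
  { apply (lim_ge_p E 0). intros; apply E_mono_inc; lra. apply E_lim_p, HDnz. }
  assert (HD' : 0 <= E 0).
  { apply (lim_le_m E 0). intros; apply E_mono_inc; lra. apply E_lim_m, HDnz. }
  lra.
Qed.

End Dpos.

Lemma c_nz : D <= 0 -> c <> 0.
Proof. intros HD Hc. unfold D in HD. rewrite Hc in HD. lra. Qed.

Section Dzero.
Hypothesis HD0 : D = 0.

Lemma V_eq0 x : V x = - c * tau * f (U x).
Proof. rewrite V_eq, HD0. ring. Qed.

Lemma dV0 x : Derive V x = - c * tau * Derive f (U x) * P x.
Proof.
  rewrite (Derive_ext V (fun y => - c * tau * f (U y)) x V_eq0).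
  apply is_derive_unique. auto_derive. split; [apply f_der|split; [apply U_der|auto]].
  etafix. unfold P. ring.
Qed.

Lemma rel0 x : c * g (U x) * P x = - f (U x).
Proof.
  replace (c * g (U x) * P x) with (c * P x + (- c * tau * Derive f (U x) * P x)) by (unfold g; ring).
  rewrite <- dV0. generalize (eq1 x). lra.
Qed.

Lemma U_le1_0 x : U x <= 1.
Proof.
  destruct (Rle_lt_dec (U x) 1) as [H|H]; auto. exfalso.
  destruct (glob_max x H) as [xm Hm].
  assert (HP0 : P xm = 0) by (apply (crit_max U xm); [apply U_isd | exact Hm]).
  assert (Hxm : 1 < U xm) by (specialize (Hm x); lra).
  assert (Hf : f (U xm) < 0).
  { destruct Hb as [_ [_ [_ [_ [_ [_ [_ [_ [_ [_ Hp3]]]]]]]]]]. apply Hp3; lra. }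
  generalize (rel0 xm). rewrite HP0. lra.
Qed.

Lemma U_ge0_0 x : 0 <= U x.
Proof.
  destruct (Rle_lt_dec 0 (U x)) as [H|H]; auto. exfalso.
  destruct (glob_min x H) as [xm Hm].
  assert (HP0 : P xm = 0) by (apply (crit_min U xm); [apply U_isd | exact Hm]).
  assert (Hxm : U xm < 0) by (specialize (Hm x); lra).
  assert (Hf : 0 < f (U xm)).
  { destruct Hb as [_ [_ [_ [_ [_ [_ [_ [Hn _]]]]]]]]. apply Hn; lra. }
  generalize (rel0 xm). rewrite HP0. lra.
Qed.

Lemma f_lip s : (forall u, 0 <= u <= 1 -> Rabs (Derive f u) <= s) ->
  forall u, 0 <= u <= 1 -> Rabs (f u) <= s * Rabs (u - alpha).
Proof.
  intros Hs' u Hu.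
  destruct Hb as [Ha [_ [Hal _]]].
  destruct (MVT_gen f alpha u (Derive f)) as [c0 [Hc0 Heq]].
  { intros; apply Derive_correct, f_der. }
  { intros; apply continuity_pt_filterlim, f_cont. }
  rewrite Hal in Heq. replace (f u) with (Derive f c0 * (u - alpha)) by lra.
  rewrite Rabs_mult. apply Rmult_le_compat_r. apply Rabs_pos. apply Hs'.
  split.
  - apply Rle_trans with (Rmin alpha u); [apply Rmin_glb; lra|lra].
  - apply Rle_trans with (Rmax alpha u); [lra|apply Rmax_lub; lra].
Qed.

Lemma Dzero_false : False.
Proof.
  destruct g_bound as [s [Hs0 [Hs1 [Hs2 Hg]]]].
  destruct Hb as [Ha [_ [Hal _]]].
  assert (Hc : c <> 0) by (apply c_nz; lra).
  set (k := Rabs c * (1 - tau * s)).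
  assert (Hk : 0 < k) by (unfold k; apply Rmult_lt_0_compat; [apply Rabs_pos_lt; exact Hc|lra]).
  set (K := s / k).
  assert (HK : 0 < K) by (unfold K; apply Rdiv_lt_0_compat; lra).
  assert (HPb : forall x, Rabs (P x) <= K * Rabs (U x - alpha)).
  { intro x. assert (Hu : 0 <= U x <= 1) by (split; [apply U_ge0_0|apply U_le1_0]).
    assert (H1 : Rabs (P x) * k <= s * Rabs (U x - alpha)).
    { apply Rle_trans with (Rabs (f (U x))); [|apply f_lip; auto].
      rewrite <- (Rabs_Ropp (f (U x))), <- (rel0 x), !Rabs_mult.
      unfold k. assert (1 - tau * s <= g (U x)) by (apply Hg; auto).
      assert (Rabs (g (U x)) = g (U x)) by (apply Rabs_right; lra). rewrite H0.
      assert (0 <= Rabs c * Rabs (P x)) by (apply Rmult_le_pos; apply Rabs_pos).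
      nra. }
    unfold K. apply Rmult_le_reg_r with k; [exact Hk|].
    replace (s / k * Rabs (U x - alpha) * k) with (s * Rabs (U x - alpha)) by (field; lra).
    exact H1. }
  set (Z := fun y => (U y - alpha) ^ 2 * exp (- (2 * K) * y)).
  set (dZ := fun y => 2 * exp (- (2 * K) * y) * ((U y - alpha) * P y - K * (U y - alpha) ^ 2)).
  assert (HZd : forall y, is_derive Z y (dZ y)).
  { intro y. unfold Z, dZ. auto_derive. apply U_der. etafix. unfold P. ring. }
  assert (HdZ : forall y, dZ y <= 0).
  { intro y. unfold dZ.
    assert (H1 : (U y - alpha) * P y <= K * (U y - alpha) ^ 2).
    { apply Rle_trans with (Rabs (U y - alpha) * Rabs (P y)).
      rewrite <- Rabs_mult. apply Rle_abs.
      replace (K * (U y - alpha) ^ 2) with (Rabs (U y - alpha) * (K * Rabs (U y - alpha))).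
      apply Rmult_le_compat_l. apply Rabs_pos. apply HPb.
      rewrite <- (pow2_abs (U y - alpha)). ring. }
    assert (0 < exp (- (2 * K) * y)) by apply exp_pos. nra. }
  destruct (lim_m_eps U 0 U_lim_m alpha) as [M HM]. lra.
  destruct (lim_p_eps U 1 U_lim_p (1 - alpha)) as [N HN]. lra.
  set (a := Rmin M N - 1). set (b := Rmax M N + 1).
  assert (Hua : U a < alpha).
  { assert (a < M) by (unfold a; generalize (Rmin_l M N); lra).
    specialize (HM a H). apply Rabs_def2 in HM. lra. }
  assert (Hub : alpha < U b).
  { assert (N < b) by (unfold b; generalize (Rmax_r M N); lra).
    specialize (HN b H). apply Rabs_def2 in HN. lra. }
  destruct (IVT (fun y => U y - alpha) a b) as [x0 [Hx0 Hx0']].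
  { intro y. apply continuity_pt_filterlim. apply (exd_cont (fun z => U z - alpha)). auto_derive. apply U_der. }
  { unfold a, b; generalize (Rmin_l M N) (Rmax_l M N); lra. }
  lra. lra.
  set (y := Rmax x0 N + 1).
  assert (HZ : Z y <= Z x0).
  { apply (mono_dec Z dZ x0 y). unfold y; generalize (Rmax_l x0 N); lra.
    intros; apply HZd. intros; apply HdZ. }
  assert (HZ0 : Z x0 = 0) by (unfold Z; replace (U x0 - alpha) with 0 by lra; ring).
  assert (HZy : 0 <= Z y).
  { unfold Z. apply Rmult_le_pos. apply pow2_ge_0. left; apply exp_pos. }
  assert (Hy1 : alpha < U y).
  { assert (N < y) by (unfold y; generalize (Rmax_r x0 N); lra).
    specialize (HN y H). apply Rabs_def2 in HN. lra. }
  assert (HZp : 0 < Z y).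
  { unfold Z. apply Rmult_lt_0_compat. apply pow2_gt_0. lra. apply exp_pos. }
  lra.
Qed.

End Dzero.

Lemma near_pos u0 : 0 <= u0 <= 1 -> exists d, 0 < d /\ forall u, Rabs (u - u0) < d -> 0 < g u.
Proof.
  intro Hu0.
  destruct g_bound as [s [Hs0 [Hs1 [Hs2 Hg]]]].
  assert (Hes : 0 < (1 - tau * s) / (tau + 1)) by (apply Rdiv_lt_0_compat; lra).
  destruct (cont_eps (Derive f) u0 (df_cont u0) _ Hes) as [d [Hd Hd']].
  exists d. split; auto. intros u Hu. specialize (Hd' u Hu).
  apply Rabs_def2 in Hd'. destruct Hd' as [Hd1 _].
  assert (H1 : 1 - tau * s <= g u0) by (apply Hg; auto).
  unfold g in *.
  assert (H2 : tau * (Derive f u - Derive f u0) <= tau * ((1 - tau * s) / (tau + 1))) by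
    (apply Rmult_le_compat_l; lra).
  assert (H3 : tau * ((1 - tau * s) / (tau + 1)) < 1 - tau * s).
  { replace (tau * ((1 - tau * s) / (tau + 1))) with ((1 - tau * s) * (tau / (tau + 1))) by (field; lra).
    assert (tau / (tau + 1) < 1). { apply (Rmult_lt_reg_r (tau + 1)). lra.
      replace (tau / (tau + 1) * (tau + 1)) with tau by (field; lra). lra. }
    assert (0 <= tau / (tau + 1)) by (apply Rdiv_le_0_compat; lra).
    nra. }
  lra.
Qed.

Section Dneg.
Hypothesis HDn : D < 0.
Let HDnz' : D <> 0. Proof. lra. Qed.

Lemma E_le_F x : E x <= F (U x).
Proof. unfold E. assert (0 <= P x ^ 2) by apply pow2_ge_0. nra. Qed.

Lemma Dneg_false : False.
Proof.
  destruct Hb as [Ha [_ [Hal _]]].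
  assert (Hc : c <> 0) by (apply c_nz; lra).
  destruct (Rtotal_order c 0) as [Hcn|[Hc0|Hcp]]; [|contradiction|].
  - destruct (near_pos 0) as [dl [Hdl Hg]]. lra.
    set (d := Rmin dl alpha).
    assert (Hd : 0 < d) by (unfold d; apply Rmin_glb_lt; lra).
    assert (Hdl' : d <= dl) by apply Rmin_l.
    assert (Hda : d <= alpha) by apply Rmin_r.
    apply (tail_contra_m U 0 d U_cont U_lim_m Hd).
    + destruct (lim_p_eps U 1 U_lim_p (1 - d)) as [N HN]. lra.
      exists (N + 1). specialize (HN (N+1)). apply Rabs_def2 in HN; [|lra].
      rewrite Rminus_0_r, Rabs_right; lra.
    + intros T HT.
      assert (Hmono : forall y, y <= T -> E y <= E T).
      { intros y Hy. apply (mono_inc E dE y T Hy). intros; apply E_der, HDnz'.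
        intros z Hz. unfold dE.
        assert (0 < g (U z)). { apply Hg. specialize (HT z (proj2 Hz)). rewrite Rminus_0_r in HT |- *. lra. }
        assert (0 <= P z ^ 2) by apply pow2_ge_0.
        assert (0 <= g (U z) * P z ^ 2) by (apply Rmult_le_pos; lra). nra. }
      assert (H0 : 0 <= E T) by (apply (lim_le_m E T (E T) 0 Hmono), E_lim_m, HDnz').
      generalize (E_le_F T). intro HE.
      assert (HUT : Rabs (U T) < d) by (specialize (HT T (Rle_refl T)); rewrite Rminus_0_r in HT; exact HT).
      apply Rabs_def2 in HUT.
      destruct (Req_dec (U T) 0) as [E0|E0]; [exact E0|].
      assert (F (U T) < 0) by (apply F_lt0; lra). lra.
  - destruct (near_pos 1) as [dl [Hdl Hg]]. lra.
    set (d := Rmin dl (1 - alpha)).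
    assert (Hd : 0 < d) by (unfold d; apply Rmin_glb_lt; lra).
    assert (Hdl' : d <= dl) by apply Rmin_l.
    assert (Hda : d <= 1 - alpha) by apply Rmin_r.
    apply (tail_contra U 1 d U_cont U_lim_p Hd).
    + destruct (lim_m_eps U 0 U_lim_m (1 - d)) as [M HM]. lra.
      exists (M - 1). specialize (HM (M-1)). apply Rabs_def2 in HM; [|lra].
      rewrite Rabs_left; lra.
    + intros T HT.
      assert (Hmono : forall y, T <= y -> E y <= E T).
      { intros y Hy. apply (mono_dec E dE T y Hy). intros; apply E_der, HDnz'.
        intros z Hz. unfold dE.
        assert (0 < g (U z)). { apply Hg. specialize (HT z (proj1 Hz)). lra. }
        assert (0 <= P z ^ 2) by apply pow2_ge_0.
        assert (0 <= g (U z) * P z ^ 2) by (apply Rmult_le_pos; lra). nra. }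
      assert (H0 : F 1 <= E T) by (apply (lim_le_p E T (E T) (F 1) Hmono), E_lim_p, HDnz').
      generalize (E_le_F T). intro HE.
      assert (HUT := HT T (Rle_refl T)).
      apply Rabs_def2 in HUT.
      destruct (Req_dec (U T) 1) as [E0|E0]; [exact E0|].
      assert (F (U T) < F 1) by (apply F_lt1; lra). lra.
Qed.

End Dneg.

Lemma D_pos : 0 < D.
Proof.
  destruct (Rtotal_order D 0) as [H|[H|H]]; auto; exfalso.
  apply Dneg_false; exact H. apply Dzero_false; exact H.
Qed.

End Main.

Theorem proposition2p1 (f : R -> R) (alpha tau c : R) (U V : R -> R) :
  smooth f -> bistable f alpha ->
  0 <= tau -> tau < tau_m f ->
  tw_solution f tau c U V ->
  ((0 < c <-> RInt f 0 1 < 0) /\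
   (c = 0 <-> RInt f 0 1 = 0) /\
   (c < 0 <-> 0 < RInt f 0 1)) /\
  c ^ 2 * tau < 1.
Proof.
  intros Hs Hb Ht0 Htm Hw.
  assert (HD := D_pos f alpha tau c U V Hs Hb Ht0 Htm Hw).
  assert (H1 := cpos_F f alpha tau c U V Hs Hb Ht0 Htm Hw HD).
  assert (H2 := cneg_F f alpha tau c U V Hs Hb Ht0 Htm Hw HD).
  assert (H3 := czero_F f alpha tau c U V Hs Hb Ht0 Htm Hw HD).
  unfold F in H1, H2, H3. unfold D in HD.
  split.
  - destruct (Rtotal_order c 0) as [Hc|[Hc|Hc]].
    + specialize (H2 Hc). repeat split; intros; lra.
    + specialize (H3 Hc). repeat split; intros; lra.
    + specialize (H1 Hc). repeat split; intros; lra.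
  - replace (c ^ 2 * tau) with (c * c * tau) by ring. lra.
Qed.
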